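(* For all $n\ge2$, $p_n(1123,1234)=p_n(1122,1233)=2^{n-5}(n^2-n+14)$.
   Context: Set partitions of $[n]$ are written in canonical sequential form (restricted growth words $\pi_1\cdots\pi_n$ with $\pi_1=1$, $\pi_{i+1}\le\max(\pi_1,\dots,\pi_i)+1$). A partition contains a pattern if it has a subsequence order-isomorphic to it; $p_n(T)$ counts partitions of $[n]$ avoiding every pattern in $T$. *)

(* Defs.v *)
From HB Require Import structures.
From mathcomp Require Import all_boot all_order all_algebra.
Set Implicit Arguments. Unset Strict Implicit. Unset Printing Implicit Defensive.

(* A word w = pi_1 ... pi_n (pi_i : nat) is in canonical sequential form
   (restricted growth word) iff pi_1 = 1, every letter is >= 1, and
   pi_{i+1} <= max(pi_1,...,pi_i) + 1 for every i. *)
Definition is_rgf (w : seq nat) : bool :=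
  [&& head 0 w == 1, all (fun x => 0 < x) w &
      [forall i : 'I_(size w),
         (0 < i) ==> (nth 0 w i <= \max_(j < i) nth 0 w j + 1)]].

Definition order_iso (s sigma : seq nat) : bool :=
  (size s == size sigma) &&
  [forall i : 'I_(size s), forall j : 'I_(size s),
     (nth 0 s i < nth 0 s j) == (nth 0 sigma i < nth 0 sigma j)].

Definition contains (w sigma : seq nat) : bool :=
  [exists m : (size w).-tuple bool, order_iso (mask m w) sigma].

Definition avoids_all (T : seq (seq nat)) (w : seq nat) : bool :=
  all (fun sigma => ~~ contains w sigma) T.

(* p_n(T): number of set partitions of [n] (as restricted growth words of
   length n; their letters are in 1..n) avoiding every pattern in T. *)
Definition p_ (n : nat) (T : seq (seq nat)) : nat :=
  #|[pred t : n.-tuple 'I_n.+1 |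
       is_rgf (map val t) && avoids_all T (map val t)]|.

(* Main.v *)
Require Import Defs.
From mathcomp Require Import all_boot all_order all_algebra.
From mathcomp Require Import zify.
Set Implicit Arguments. Unset Strict Implicit. Unset Printing Implicit Defensive.


Lemma card_count (T : finType) (P : pred T) : #|[pred t | P t]| = count P (enum T).
Proof. rewrite cardE /enum_mem size_filter count_filter; apply: eq_count => x /=; by rewrite andbT. Qed.

Lemma forall_iota n (P : nat -> bool) : [forall i : 'I_n, P i] = all P (iota 0 n).
Proof.
apply/forallP/allP => [H i | H i]; last by apply: H; rewrite mem_iota /=.
rewrite mem_iota /= => Hi; exact: (H (Ordinal Hi)).
Qed.

Definition mx (w : seq nat) := \max_(j < size w) nth 0 w j.

Lemma mx_nil : mx [::] = 0. Proof. by rewrite /mx big_ord0. Qed.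

Lemma max_nth_rcons (w : seq nat) x i : i <= size w ->
  \max_(j < i) nth 0 (rcons w x) j = \max_(j < i) nth 0 w j.
Proof.
move=> Hi; apply: eq_bigr => j _; rewrite nth_rcons.
by have -> : j < size w by apply: leq_trans (ltn_ord j) Hi.
Qed.

Lemma mx_rcons w x : mx (rcons w x) = maxn (mx w) x.
Proof.
rewrite /mx size_rcons big_ord_recr /= max_nth_rcons //.
by rewrite nth_rcons ltnn eqxx.
Qed.

Lemma mem_le_mx w y : y \in w -> y <= mx w.
Proof.
move=> Hy; rewrite -(nth_index 0 Hy) /mx.
have Hi : index y w < size w by rewrite index_mem.
exact: (leq_bigmax_cond (Ordinal Hi)).
Qed.

Lemma iota_rcons m n : iota m n.+1 = rcons (iota m n) (m + n).
Proof. by rewrite -addn1 iotaD cats1. Qed.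

Definition rgfP (w : seq nat) (i : nat) := (0 < i) ==> (nth 0 w i <= \max_(j < i) nth 0 w j + 1).

Lemma is_rgfE w : is_rgf w = [&& head 0 w == 1, all (fun x => 0 < x) w & all (rgfP w) (iota 0 (size w))].
Proof. by rewrite /is_rgf -(forall_iota (size w) (rgfP w)). Qed.

Lemma rgfP_last w x : rgfP (rcons w x) (size w) = (0 < size w) ==> (x <= (mx w).+1).
Proof. by rewrite /rgfP nth_rcons ltnn eqxx max_nth_rcons // addn1. Qed.

Lemma rgfP_rcons w x i : i < size w -> rgfP (rcons w x) i = rgfP w i.
Proof. by move=> Hi; rewrite /rgfP nth_rcons Hi max_nth_rcons // ltnW. Qed.

Lemma rgf_rcons_ne w x : w != [::] ->
  is_rgf (rcons w x) = [&& is_rgf w, 0 < x & x <= (mx w).+1].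
Proof.
move=> Hw; have Hs : 0 < size w by case: w Hw.
rewrite !is_rgfE size_rcons iota_rcons all_rcons add0n all_rcons rgfP_last Hs /=.
have E2 : all (rgfP (rcons w x)) (iota 0 (size w)) = all (rgfP w) (iota 0 (size w)).
  apply: eq_in_all => i; rewrite mem_iota /= => Hi.
  exact: rgfP_rcons.
have E3 : head 0 (rcons w x) = head 0 w by case: (w) Hw.
rewrite E2 E3.
by case: (_ == 1); case: (0 < x); case: all; case: all; case: (x <= _).
Qed.

Lemma rgf_rcons w x : is_rgf (rcons w x) =
  if w is [::] then x == 1 else [&& is_rgf w, 0 < x & x <= (mx w).+1].
Proof.
case: w => [|y w]; first by rewrite is_rgfE /= andbT; case: x => [|[|x]].
by rewrite rgf_rcons_ne.
Qed.


Lemma subseq_rcons2 (s w : seq nat) x y :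
  subseq (rcons s y) (rcons w x) = subseq (rcons s y) w || ((y == x) && subseq s w).
Proof.
rewrite -[LHS]subseq_rev rev_rcons rev_rcons /=.
case: eqVneq => [->|_] /=; last by rewrite orbF -[RHS]subseq_rev rev_rcons.
rewrite -[subseq (rcons s x) w]subseq_rev -[subseq s w]subseq_rev rev_rcons.
case H: (subseq (rev s) (rev w)); first by rewrite orbT.
rewrite orbF; apply/esym/negbTE/negP => H2; move/negbT/negP: H; apply.
apply: subseq_trans H2; exact: subseq_cons.
Qed.


Lemma containsP w sigma :
  reflect (exists2 s, subseq s w & order_iso s sigma) (contains w sigma).
Proof.
apply: (iffP existsP) => [[m Hm] | [s Hs Hi]].
  by exists (mask m w) => //; exact: mask_subseq.
case/subseqP: Hs => m Hm Hs; subst s.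
have Hm' : size m == size w by apply/eqP.
by exists (Tuple Hm').
Qed.

Lemma isoE s sig : order_iso s sig = (size s == size sig) &&
  all (fun i => all (fun j => (nth 0 s i < nth 0 s j) == (nth 0 sig i < nth 0 sig j))
    (iota 0 (size s))) (iota 0 (size s)).
Proof.
rewrite /order_iso; congr andb.
apply/forallP/allP => [H i | H i].
  rewrite mem_iota /= => Hi; apply/allP => j; rewrite mem_iota /= => Hj.
  exact: (forallP (H (Ordinal Hi)) (Ordinal Hj)).
apply/forallP => j.
have := H i; rewrite mem_iota /= ltn_ord => /(_ isT) /allP; apply.
by rewrite mem_iota /=.
Qed.

Lemma iso1123 a b c d : order_iso [:: a; b; c; d] [:: 1; 1; 2; 3] = [&& a == b, b < c & c < d].
Proof.
rewrite isoE /=. 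
apply/idP/idP; lia.
Qed.

Lemma iso1234 a b c d : order_iso [:: a; b; c; d] [:: 1; 2; 3; 4] = [&& a < b, b < c & c < d].
Proof. rewrite isoE /=; apply/idP/idP; lia. Qed.
Lemma iso1122 a b c d : order_iso [:: a; b; c; d] [:: 1; 1; 2; 2] = [&& a == b, b < c & c == d].
Proof. rewrite isoE /=; apply/idP/idP; lia. Qed.
Lemma iso1233 a b c d : order_iso [:: a; b; c; d] [:: 1; 2; 3; 3] = [&& a < b, b < c & c == d].
Proof. rewrite isoE /=; apply/idP/idP; lia. Qed.

Lemma iso_size s sig : order_iso s sig -> size s = size sig.
Proof. by case/andP => /eqP. Qed.

Lemma contains_rconsP w x sig : contains (rcons w x) sig -> size sig = 4 ->
  contains w sig \/ exists a b c, subseq [:: a; b; c] w /\ order_iso [:: a; b; c; x] sig.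
Proof.
move=> /containsP [s Hs Hi] Hsz.
have Hs4 := iso_size Hi; rewrite Hsz in Hs4.
case/lastP: s Hs Hi Hs4 => [//|s y] Hs Hi Hs4.
rewrite subseq_rcons2 in Hs; case/orP: Hs => [Hs|/andP [/eqP Hy Hs]].
  by left; apply/containsP; exists (rcons s y).
right; subst y; rewrite size_rcons in Hs4.
case: s Hs Hi Hs4 => [|a [|b [|c [|e s]]]] //= Hs Hi _.
by exists a, b, c.
Qed.

Lemma contains_rcons_ext w x a b c sig : subseq [:: a; b; c] w ->
  order_iso [:: a; b; c; x] sig -> contains (rcons w x) sig.
Proof.
move=> Hs Hi; apply/containsP; exists (rcons [:: a; b; c] x) => //.
by rewrite subseq_rcons2 eqxx Hs orbT.
Qed.

Lemma contains_rcons_mono w x sig : contains w sig -> contains (rcons w x) sig.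
Proof.
case/containsP => s Hs Hi; apply/containsP; exists s => //.
exact: subseq_trans Hs (subseq_rcons w x).
Qed.

Lemma contains_size w sig : contains w sig -> size sig <= size w.
Proof. by case/containsP => s Hs /iso_size <-; exact: size_subseq. Qed.

Lemma rgf_ne w : is_rgf w -> w != [::].
Proof. by case: w. Qed.

Lemma rgf_pos w y : is_rgf w -> y \in w -> 0 < y.
Proof. by case/and3P => _ /allP H _ /H. Qed.

Lemma rgf_one w : is_rgf w -> 1 \in w.
Proof. by case: w => [|y w] //; case/and3P => /= /eqP -> _ _; rewrite mem_head. Qed.

Lemma rgf_iota w k : is_rgf w -> k <= mx w -> subseq (iota 1 k) w.
Proof.
elim/last_ind: w k => [|w x IH] k //.
case: w IH => [|y w] IH.
  rewrite rgf_rcons mx_rcons mx_nil max0n => /eqP -> .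
  by case: k => [|[|k]].
set w' := y :: w; rewrite rgf_rcons_ne // => /and3P [Hr Hx Hxm].
rewrite mx_rcons => Hk.
case: (leqP k (mx w')) => Hkm.
  exact: subseq_trans (IH _ Hr Hkm) (subseq_rcons _ _).
have Ek : k = (mx w').+1 by rewrite leq_max leqNgt Hkm /= in Hk; apply/eqP; rewrite eqn_leq Hkm andbT; exact: leq_trans Hk Hxm.
have Ex : x = (mx w').+1 by apply/eqP; rewrite eqn_leq Hxm; rewrite leq_max leqNgt Hkm /= in Hk; rewrite -Ek.
rewrite Ek iota_rcons subseq_rcons2 Ex add1n eqxx IH ?orbT //.
Qed.

Lemma mx_le_size w : is_rgf w -> mx w <= size w.
Proof. by move=> H; have := size_subseq (rgf_iota H (leqnn _)); rewrite size_iota. Qed.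

Lemma mx_ge1 w : is_rgf w -> 0 < mx w.
Proof. by move=> H; apply: mem_le_mx (rgf_one H). Qed.

Definition c11 w := subseq [:: 1; 1] w.
Definition c112 w := subseq [:: 1; 1; 2] w.

Lemma c11_rcons w x : c11 (rcons w x) = c11 w || (x == 1) && (1 \in w).
Proof. by rewrite /c11 -[[:: 1; 1] in LHS]/(rcons [:: 1] 1) subseq_rcons2 sub1seq eq_sym. Qed.

Lemma c112_rcons w x : c112 (rcons w x) = c112 w || (x == 2) && c11 w.
Proof. by rewrite /c112 -[[:: 1; 1; 2] in LHS]/(rcons [:: 1; 1] 2) subseq_rcons2 eq_sym. Qed.

Lemma c112_mx w : c112 w -> 2 <= mx w.
Proof. by move=> H; apply: mem_le_mx; apply: (mem_subseq H); rewrite !inE. Qed.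


Definition TA := [:: [:: 1; 1; 2; 3]; [:: 1; 2; 3; 4]].
Definition TB := [:: [:: 1; 1; 2; 2]; [:: 1; 2; 3; 3]].
Definition VA w := is_rgf w && avoids_all TA w.
Definition VB w := is_rgf w && avoids_all TB w.

Lemma VA_mx w : VA w -> mx w <= 3.
Proof.
case/andP => Hr /= /and3P [_ H4 _]; rewrite leqNgt; apply/negP => Hm.
move/negP: H4; apply.
have Hs := rgf_iota Hr Hm.
apply/containsP; exists [:: 1; 2; 3; 4] => //.
by rewrite isoE.
Qed.

Lemma VA_rcons w x : VA w ->
  VA (rcons w x) = [&& 0 < x, x <= (mx w).+1, x <= 3 & (x == 3) ==> ~~ c112 w].
Proof.
move=> Hv; have Hm3 := VA_mx Hv.
case/andP: Hv => Hr /= /and3P [nA nB _].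
rewrite /VA rgf_rcons_ne ?rgf_ne // Hr /= andbT.
apply/idP/idP.
- case/and3P => /andP [Hx Hxm] nA' nB'.
  rewrite Hx Hxm /=.
  have Hx3 : x <= 3.
    rewrite leqNgt; apply/negP => H4; move/negP: nB'; apply.
    have Hm : 3 <= mx w by lia.
    apply: (@contains_rcons_ext _ _ 1 2 3); last by rewrite iso1234; lia.
    exact: (rgf_iota Hr Hm).
  rewrite Hx3 /=; apply/implyP => /eqP Ex; subst x.
  apply/negP => Hc; move/negP: nA'; apply.
  apply: (@contains_rcons_ext _ _ 1 1 2) => //.
  by rewrite iso1123.
- case/and4P => Hx Hxm Hx3 Hc; rewrite Hx Hxm /=.
  apply/andP; split; apply/negP => /contains_rconsP /(_ erefl) [].
  + by apply/negP.
  + move=> [a [b [c [Hs]]]]; rewrite iso1123 => /and3P [/eqP Eab Hbc Hcx].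
    have Ha : 0 < a by apply: (rgf_pos Hr); apply: (mem_subseq Hs); rewrite mem_head.
    have Ex : x = 3 by lia.
    have Eb : b = 1 by lia.
    have Ec : c = 2 by lia.
    subst; move: Hc; rewrite eqxx /= => /negP; apply; exact: Hs.
  + by apply/negP.
  + move=> [a [b [c [Hs]]]]; rewrite iso1234 => /and3P [Hab Hbc Hcx].
    have Ha : 0 < a by apply: (rgf_pos Hr); apply: (mem_subseq Hs); rewrite mem_head.
    lia.
Qed.

Lemma sub12x_iota x : 3 <= x -> subseq [:: 1; 2; x] (iota 1 x).
Proof.
move=> Hx; have -> : x = (x - 3).+3 by lia.
set k := x - 3.
rewrite (_ : iota 1 k.+3 = 1 :: 2 :: iota 3 k.+1) // iota_rcons /=.
by rewrite sub1seq mem_rcons inE addnC addn3 eqxx.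
Qed.

Lemma VB_rcons w x : VB w ->
  VB (rcons w x) = [&& 0 < x, x <= (mx w).+1, (x == 2) ==> ~~ c112 w & (3 <= x) ==> (mx w < x)].
Proof.
case/andP => Hr /= /and3P [nA nB _].
rewrite /VB rgf_rcons_ne ?rgf_ne // Hr /= andbT.
apply/idP/idP.
- case/and3P => /andP [Hx Hxm] nA' nB'.
  rewrite Hx Hxm /=; apply/andP; split.
    apply/implyP => /eqP Ex; subst x.
    apply/negP => Hc; move/negP: nA'; apply.
    apply: (@contains_rcons_ext _ _ 1 1 2) => //.
    by rewrite iso1122.
  apply/implyP => H3; rewrite ltnNge; apply/negP => Hxm'.
  move/negP: nB'; apply.
  apply: (@contains_rcons_ext _ _ 1 2 x); last by rewrite iso1233; lia.
  exact: subseq_trans (sub12x_iota H3) (rgf_iota Hr Hxm').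
- case/and4P => Hx Hxm H2 H3; rewrite Hx Hxm /=.
  apply/andP; split; apply/negP => /contains_rconsP /(_ erefl) [].
  + by apply/negP.
  + move=> [a [b [c [Hs]]]]; rewrite iso1122 => /and3P [/eqP Eab Hbc /eqP Hcx].
    have Ha : 0 < a by apply: (rgf_pos Hr); apply: (mem_subseq Hs); rewrite mem_head.
    have Hc : c <= mx w by apply: mem_le_mx; apply: (mem_subseq Hs); rewrite !inE eqxx !orbT.
    have Ex : x = 2.
      move: H3; case: (leqP 3 x) => //= H3' H; lia.
    have Eb : b = 1 by lia.
    subst; move: H2; rewrite eqxx /= => /negP; apply; exact: Hs.
  + by apply/negP.
  + move=> [a [b [c [Hs]]]]; rewrite iso1233 => /and3P [Hab Hbc /eqP Hcx].
    have Ha : 0 < a by apply: (rgf_pos Hr); apply: (mem_subseq Hs); rewrite mem_head.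
    have Hc : c <= mx w by apply: mem_le_mx; apply: (mem_subseq Hs); rewrite !inE eqxx !orbT.
    move: H3; case: (leqP 3 x) => //= H3' H; lia.
Qed.


Fixpoint allseq K r : seq (seq nat) :=
  if r is r'.+1 then [seq x :: u | x <- iota 0 K.+1, u <- allseq K r'] else [:: [::]].

Definition E (V : pred (seq nat)) K w r := count (fun u => V (w ++ u)) (allseq K r).

Lemma count_allpairs (P : pred (seq nat)) (s : seq nat) (t : seq (seq nat)) :
  count P [seq x :: u | x <- s, u <- t] = \sum_(x <- s) count (fun u => P (x :: u)) t.
Proof.
elim: s => [|x s IH]; first by rewrite big_nil.
by rewrite big_cons /= count_cat count_map IH.
Qed.

Lemma allseqS K r : allseq K r.+1 = [seq x :: u | x <- iota 0 K.+1, u <- allseq K r].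
Proof. by []. Qed.

Lemma E_S V K w r : E V K w r.+1 = \sum_(0 <= x < K.+1) E V K (rcons w x) r.
Proof.
rewrite /E allseqS count_allpairs.
rewrite /index_iota subn0; apply: eq_bigr => x _ /=.
by apply: eq_count => u /=; rewrite cat_rcons.
Qed.


Lemma E_0 V K w : E V K w 0 = V w.
Proof. by rewrite /E /= cats0 addn0. Qed.

Lemma sum_ind a c N : \sum_(0 <= x < N) ((x == a) * c) = (a < N) * c.
Proof.
elim: N => [|N IH]; first by rewrite big_geq.
rewrite big_nat_recr //= IH [a < N.+1]ltnS [a <= N]leq_eqVlt eq_sym.
case: eqVneq => [->|_]; rewrite ?ltnn /= ?mul0n ?addn0 ?add0n //.
Qed.

Section Main.
Variable V : pred (seq nat).
Variable K : nat.
Variable F : seq nat -> nat -> nat.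
Hypothesis PC : forall w x, w != [::] -> V (rcons w x) -> V w.
Hypothesis F0 : forall w, V w -> F w 0 = 1.
Hypothesis FS : forall w r, V w -> size w + r.+1 <= K ->
  \sum_(0 <= x < K.+1) (V (rcons w x) * F (rcons w x) r) = F w r.+1.

Lemma PC_cat v u : V (v ++ u) -> v != [::] -> V v.
Proof.
elim/last_ind: u => [|u y IH]; first by rewrite cats0.
rewrite -rcons_cat => H Hv; apply: IH (Hv); apply: PC H.
by case: (v) Hv.
Qed.

Lemma E_zero w r : w != [::] -> ~~ V w -> E V K w r = 0.
Proof.
move=> Hw Hv; apply/eqP; rewrite eqn0Ngt -has_count; apply/hasPn => u _.
by apply/negP => /PC_cat /(_ Hw); apply/negP.
Qed.

Lemma E_main r w : V w -> size w + r <= K -> E V K w r = F w r.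
Proof.
elim: r w => [|r IH] w Hv Hs; first by rewrite E_0 Hv F0.
rewrite E_S -FS //; apply: eq_bigr => x _.
case Hx: (V (rcons w x)).
  by rewrite (IH _ Hx) ?mul1n // size_rcons addSn -addnS.
by rewrite E_zero ?Hx //; case: (w).
Qed.
End Main.


Fixpoint f1 r := if r is r'.+1 then 2 * f1 r' + 2 ^ r' else 1.
Fixpoint f2 r := if r is r'.+1 then f1 r' + 2 * f2 r' else 1.
Definition f3 r := if r is r'.+1 then 2 ^ r' + f2 r' else 1.

Definition Fv m (a b : bool) r :=
  if b then 2 ^ r else if m <= 1 then (if a then 2 ^ r else f3 r)
  else if a then f1 r else f2 r.

Definition Fw w r := Fv (mx w) (c11 w) (c112 w) r.

Lemma Fw0 w : Fw w 0 = 1.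
Proof. by rewrite /Fw /Fv; case: c112; case: (mx w <= 1); case: c11. Qed.

Lemma VA_pc w x : w != [::] -> VA (rcons w x) -> VA w.
Proof.
move=> Hw /andP [Hr Ha]; apply/andP; split.
  by move: Hr; rewrite rgf_rcons_ne // => /and3P [].
move: Ha; rewrite /avoids_all /= => /and3P [H1 H2 _].
by rewrite andbT; apply/andP; split; apply: contra (@contains_rcons_mono _ x _) _.
Qed.

Lemma VB_pc w x : w != [::] -> VB (rcons w x) -> VB w.
Proof.
move=> Hw /andP [Hr Ha]; apply/andP; split.
  by move: Hr; rewrite rgf_rcons_ne // => /and3P [].
move: Ha; rewrite /avoids_all /= => /and3P [H1 H2 _].
by rewrite andbT; apply/andP; split; apply: contra (@contains_rcons_mono _ x _) _.
Qed.

Lemma VA_point w r x : VA w ->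
  VA (rcons w x) * Fw (rcons w x) r =
  (x == 1) * Fv (mx w) true (c112 w) r + (x == 2) * Fv (maxn (mx w) 2) (c11 w) (c112 w || c11 w) r
  + (x == 3) * (((2 <= mx w) && ~~ c112 w) * Fv 3 (c11 w) (c112 w) r).
Proof.
move=> Hv; have Hm3 := VA_mx Hv; have Hr : is_rgf w by case/andP: Hv.
have Hm1 := mx_ge1 Hr; have H1 := rgf_one Hr.
rewrite (VA_rcons _ Hv) /Fw mx_rcons c11_rcons c112_rcons H1.
case: x => [|[|[|[|x]]]] //=.
- by rewrite orbT orbF (maxn_idPl Hm1) !mul1n !mul0n !addn0.
- by rewrite andbT orbF !mul0n !mul1n add0n addn0 ltnS Hm1 mul1n.
- rewrite !orbF !mul0n !add0n mul1n.
  have -> : maxn (mx w) 3 = 3 by lia.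
  by rewrite ltnS.
- by rewrite andbF !mul0n.
Qed.

Lemma FvA m a b r : 1 <= m <= 3 ->
  Fv m a b r.+1 = Fv m true b r + Fv (maxn m 2) a (b || a) r + ((2 <= m) && ~~ b) * Fv 3 a b r.
Proof.
case: m => [|[|[|[|m]]]] // _; case: a; case: b; rewrite /Fv /= ?expnS; lia.
Qed.

Lemma FvB m (a b : bool) r : 1 <= m -> (b -> 2 <= m) ->
  Fv m a b r.+1 = Fv m true b r + (~~ b) * Fv (maxn m 2) a a r + (2 <= m) * Fv m.+1 a b r.
Proof.
move=> H1 Hb; case: (leqP m 1) => Hm.
  case: b Hb => [/(_ isT) | _]; first by lia.
  have -> : m = 1 by lia.
  case: a; rewrite /Fv /= ?expnS; lia.
have -> : maxn m 2 = m by lia.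
have Hm' : (m <= 1) = false by lia.
have Hm'' : (m.+1 <= 1) = false by lia.
have Hm2 : (2 <= m) = true by lia.
rewrite /Fv Hm' Hm'' /=.
case: b Hb => _; case: a; rewrite /= ?expnS; lia.
Qed.

Lemma VA_step K w r : VA w -> size w + r.+1 <= K ->
  \sum_(0 <= x < K.+1) (VA (rcons w x) * Fw (rcons w x) r) = Fw w r.+1.
Proof.
move=> Hv Hs.
have Hr : is_rgf w by case/andP: Hv.
have Hm1 := mx_ge1 Hr; have Hm3 := VA_mx Hv; have Hms := mx_le_size Hr.
have Hw : 0 < size w by case: (w) Hr.
rewrite (eq_bigr _ (fun x _ => VA_point r x Hv)) !big_split /= !sum_ind.
have -> : 1 < K.+1 by lia.
have -> : 2 < K.+1 by lia.
rewrite !mul1n /Fw FvA; last by rewrite Hm1 Hm3.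
congr (_ + _); case: (ltnP 3 K.+1) => H; first by rewrite mul1n.
have -> : 2 <= mx w = false by lia.
by [].
Qed.

Lemma VB_point w r x : VB w ->
  VB (rcons w x) * Fw (rcons w x) r =
  (x == 1) * Fv (mx w) true (c112 w) r + (x == 2) * ((~~ c112 w) * Fv (maxn (mx w) 2) (c11 w) (c11 w) r)
  + (x == (mx w).+1) * ((2 <= mx w) * Fv (mx w).+1 (c11 w) (c112 w) r).
Proof.
move=> Hv; have Hr : is_rgf w by case/andP: Hv.
have Hm1 := mx_ge1 Hr; have H1 := rgf_one Hr.
rewrite (VB_rcons _ Hv) /Fw mx_rcons c11_rcons c112_rcons H1.
case: x => [|[|[|x]]] /=.
- by rewrite !mul0n.
- have E1 : (1 == (mx w).+1) = false by lia.
  by rewrite E1 orbT orbF (maxn_idPl Hm1) !mul1n !mul0n !addn0.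
- have E2 : (2 == (mx w).+1) * ((1 < mx w) * Fv (mx w).+1 (c11 w) (c112 w) r) = 0.
    by case: (mx w) Hm1 => [|[|m]].
  rewrite E2 addn0 ltnS Hm1 mul0n add0n mul1n orbF.
  by case: (c112 w).
- case: (eqVneq (mx w) x.+2) => [E|NE].
    have E3 : (x.+2 < (mx w).+1 <= x.+3) = true by lia.
    have E4 : (x.+3 == (mx w).+1) = true by lia.
    have E5 : maxn (mx w) x.+3 = (mx w).+1 by lia.
    have E6 : (1 < mx w) = true by lia.
    by rewrite E3 E4 E5 E6 !orbF !mul1n !mul0n.
  have E3 : (x.+2 < (mx w).+1 <= x.+3) = false by lia.
  have E4 : (x.+3 == (mx w).+1) = false by lia.
  by rewrite E3 E4 !mul0n.
Qed.


Lemma VB_step K w r : VB w -> size w + r.+1 <= K ->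
  \sum_(0 <= x < K.+1) (VB (rcons w x) * Fw (rcons w x) r) = Fw w r.+1.
Proof.
move=> Hv Hs.
have Hr : is_rgf w by case/andP: Hv.
have Hm1 := mx_ge1 Hr; have Hms := mx_le_size Hr.
rewrite (eq_bigr _ (fun x _ => VB_point r x Hv)) !big_split /= !sum_ind.
have -> : 1 < K.+1 by lia.
have -> : 2 < K.+1 by lia.
have -> : (mx w).+1 < K.+1 by lia.
rewrite !mul1n /Fw FvB //.
exact: c112_mx.
Qed.

Lemma f1E k : 2 * f1 k = 2 ^ k * (k + 2).
Proof. elim: k => [//|k IH] /=; rewrite expnS; nia. Qed.

Lemma f2E k : 8 * f2 k = 2 ^ k * (k * k + 3 * k + 8).
Proof. elim: k => [//|k IH] /=; have := f1E k; rewrite expnS; nia. Qed.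

Lemma f3E k : 32 * f3 k.+1 = 2 ^ k.+2 * ((k.+2) ^ 2 - k.+2 + 14).
Proof.
have -> : (k.+2) ^ 2 - k.+2 + 14 = k * k + 3 * k + 16 by rewrite expnS expn1; lia.
rewrite /f3 !expnS; have := f2E k.
nia.
Qed.


Lemma allseq_uniq K r : uniq (allseq K r).
Proof.
elim: r => [//|r IH]; rewrite allseqS; apply: allpairs_uniq => //.
  exact: iota_uniq.
by move=> [x1 u1] [x2 u2] _ _ /= [-> ->].
Qed.

Lemma mem_allseq K r s : (s \in allseq K r) = (size s == r) && all (fun x => x < K.+1) s.
Proof.
elim: r s => [|r IH] s; first by case: s.
rewrite allseqS; apply/allpairsP/idP => [[[x u] [/= Hx Hu ->]]|].
  rewrite /= eqSS; rewrite IH in Hu; case/andP: Hu => -> ->; rewrite andbT -(mem_iota 0 K.+1) //.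
case: s => [//|x u] /= /andP [Hs /andP [Hx Hu]].
exists (x, u); split => //=; last by rewrite IH -eqSS Hs Hu.
by rewrite -[0 :: iota 1 K]/(iota 0 K.+1) mem_iota.
Qed.

Lemma p_count n T : p_ n T = count (fun u => is_rgf u && avoids_all T u) (allseq n n).
Proof.
rewrite /p_ card_count.
rewrite -(count_map (fun t : n.-tuple 'I_n.+1 => map val t) (fun u => is_rgf u && avoids_all T u)).
apply/permP; apply: uniq_perm.
- rewrite map_inj_uniq ?enum_uniq //.
  by move=> t1 t2 /(inj_map val_inj) /val_inj.
- exact: allseq_uniq.
move=> s; rewrite mem_allseq; apply/mapP/idP.
  move=> [t _ ->]; rewrite size_map size_tuple eqxx /=.
  by apply/allP => x /mapP [i _ ->]; exact: ltn_ord.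
case/andP => /eqP Hs /allP Ha.
have Hs' : size (map (@inord n) s) == n by rewrite size_map Hs.
exists (Tuple Hs'); first by rewrite mem_enum.
rewrite /= -map_comp map_id_in // => x Hx /=.
by rewrite inordK //; apply: Ha.
Qed.

Lemma V1 T : (forall sig, sig \in T -> 1 < size sig) -> is_rgf [:: 1] && avoids_all T [:: 1].
Proof.
move=> HT; apply/andP; split; first by have := rgf_rcons [::] 1; rewrite /= => ->.
apply/allP => sig Hsig; apply/negP => /contains_size /=.
by move=> H; move: (HT _ Hsig); rewrite ltnNge H.
Qed.

Lemma Vx T x : x != 1 -> ~~ (is_rgf [:: x] && avoids_all T [:: x]).
Proof. by move=> Hx; have := rgf_rcons [::] x; rewrite /= => ->; rewrite (negbTE Hx). Qed.

Lemma p_formula n T (V := fun u => is_rgf u && avoids_all T u) :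
  (forall sig, sig \in T -> 1 < size sig) ->
  (forall w x, w != [::] -> V (rcons w x) -> V w) ->
  (forall w r, V w -> size w + r.+1 <= n ->
     \sum_(0 <= x < n.+1) (V (rcons w x) * Fw (rcons w x) r) = Fw w r.+1) ->
  forall k, n = k.+1 -> p_ n T = f3 k.
Proof.
move=> HT PC FS k Hn.
rewrite p_count -/V.
have -> : count V (allseq n n) = E V n [::] n by [].
rewrite {2}Hn E_S.
rewrite (eq_bigr (fun x => (x == 1) * Fw [:: 1] k)); last first.
  move=> x _; case: eqVneq => [->|Hx].
    rewrite mul1n (E_main PC (fun w _ => Fw0 w) FS) //; first exact: V1.
    by rewrite Hn.
  by rewrite mul0n (E_zero _ PC) //; exact: Vx.
rewrite sum_ind {1}Hn mul1n /Fw (_ : mx [:: 1] = 1); last by rewrite /mx big_ord_recl big_ord0.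
by [].
Qed.

Unset Implicit Arguments.
Import GRing.Theory Num.Theory.
Local Open Scope ring_scope.

Lemma ratform k : ((f3 k.+1)%:R : rat) = (2%:R : rat) ^ ((k.+2)%:Z - 5%:Z) * (((k.+2) ^ 2 - k.+2 + 14)%N)%:R.
Proof.
have H := f3E k.
have Hr : ((2%:R : rat) ^+ 5) * (f3 k.+1)%:R = (2%:R : rat) ^+ k.+2 * (((k.+2) ^ 2 - k.+2 + 14)%N)%:R.
  by rewrite -!natrX -!natrM H.
rewrite expfzDr ?pnatr_eq0 // -exprnP -exprnN mulrAC -Hr mulrC mulrA mulVf ?mul1r //.
Qed.

Theorem proposition4p19 (n : nat) (hn : (2 <= n)%N) :
  ((p_ n [:: [:: 1; 1; 2; 3]%N; [:: 1; 2; 3; 4]%N])%:R : rat)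
    = (2%:R : rat) ^ (n%:Z - 5%:Z) * ((n ^ 2 - n + 14)%N)%:R /\
  ((p_ n [:: [:: 1; 1; 2; 2]%N; [:: 1; 2; 3; 3]%N])%:R : rat)
    = (2%:R : rat) ^ (n%:Z - 5%:Z) * ((n ^ 2 - n + 14)%N)%:R.
Proof.
case: n hn => [|[|k]] // _.
split; rewrite (@p_formula _ _ _ _ _ k.+1) ?ratform //.
- by move=> sig; rewrite !inE => /orP [] /eqP ->.
- exact: VA_pc.
- exact: VA_step.
- by move=> sig; rewrite !inE => /orP [] /eqP ->.
- exact: VB_pc.
- exact: VB_step.
Qed.
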